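(* Let $V$ be a real vector space with two inner products $\langle\cdot,\cdot\rangle_1$ and $\langle\cdot,\cdot\rangle_2$, and let $\theta_0\in(0,\pi)$. Suppose that for all nonzero $x,y\in V$, the angle between $x$ and $y$ with respect to $\langle\cdot,\cdot\rangle_1$ is $\theta_0$ if and only if the angle between them with respect to $\langle\cdot,\cdot\rangle_2$ is $\theta_0$. Then there is $c>0$ such that $\langle x,y\rangle_2=c\langle x,y\rangle_1$ for all $x,y\in V$.
   Context: For an inner product $\langle\cdot,\cdot\rangle$ on a real vector space with norm $\|x\|=\sqrt{\langle x,x\rangle}$, the angle between nonzero vectors $x,y$ is the unique $\theta\in[0,\pi]$ with $\cos\theta=\langle x,y\rangle/(\|x\|\|y\|)$. *)

(* Defs.v *)
From HB Require Import structures.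
From mathcomp Require Import all_boot all_order all_algebra.
From mathcomp Require Import all_classical all_reals all_analysis.
Set Implicit Arguments. Unset Strict Implicit. Unset Printing Implicit Defensive.
Import Order.TTheory GRing.Theory Num.Theory.
Local Open Scope ring_scope.

Definition is_inner_product (R : realType) (V : lmodType R) (ip : V -> V -> R) : Prop :=
  [/\ (forall x y : V, ip x y = ip y x),
      (forall (a : R) (x y z : V), ip (a *: x + y) z = a * ip x z + ip y z)
    & (forall x : V, x != 0 -> 0 < ip x x)].

Definition ip_norm (R : realType) (V : lmodType R) (ip : V -> V -> R) (x : V) : R :=
  Num.sqrt (ip x x).

Definition ip_angle (R : realType) (V : lmodType R) (ip : V -> V -> R) (x y : V) : R :=
  acos (ip x y / (ip_norm ip x * ip_norm ip y)).

(* Main.v *)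
Require Import Defs.
From HB Require Import structures.
From mathcomp Require Import all_boot all_order all_algebra.
From mathcomp Require Import all_classical all_reals all_analysis.
From mathcomp Require Import ring lra.
Import Order.TTheory GRing.Theory Num.Theory.
Local Open Scope ring_scope.

Section IP.
Variables (R : realType) (V : lmodType R) (ip : V -> V -> R).
Hypothesis H : is_inner_product ip.

Lemma ipC x y : ip x y = ip y x.
Proof. by case: H. Qed.

Lemma ip_lin a x y z : ip (a *: x + y) z = a * ip x z + ip y z.
Proof. by case: H. Qed.

Lemma ip0l z : ip 0 z = 0.
Proof.
have := ip_lin 1 0 0 z; rewrite scaler0 addr0 mul1r => h; lra.
Qed.

Lemma ipDl x y z : ip (x + y) z = ip x z + ip y z.
Proof. by rewrite -[x]scale1r ip_lin mul1r scale1r. Qed.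

Lemma ipZl a x z : ip (a *: x) z = a * ip x z.
Proof. by have := ip_lin a x 0 z; rewrite addr0 ip0l addr0. Qed.

Lemma ipDr x y z : ip z (x + y) = ip z x + ip z y.
Proof. by rewrite ipC ipDl ipC (ipC y). Qed.

Lemma ipZr a x z : ip z (a *: x) = a * ip z x.
Proof. by rewrite ipC ipZl ipC. Qed.

Lemma ip0r z : ip z 0 = 0.
Proof. by rewrite ipC ip0l. Qed.

Lemma ipNl x z : ip (- x) z = - ip x z.
Proof. by rewrite -scaleN1r ipZl mulN1r. Qed.

Lemma ipNr x z : ip z (- x) = - ip z x.
Proof. by rewrite ipC ipNl ipC. Qed.

Lemma ipq_gt0 {x} : x != 0 -> 0 < ip x x.
Proof. by case: H => _ _; apply. Qed.

Lemma ipq_ge0 x : 0 <= ip x x.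
Proof.
have [->|/ipq_gt0 h] := eqVneq x 0; first by rewrite ip0l.
exact: ltW.
Qed.

Lemma cauchy_schwarz x y : ip x y ^+ 2 <= ip x x * ip y y.
Proof.
have [->|x0] := eqVneq x 0; first by rewrite ip0l ip0l expr2 !mul0r.
have qx := ipq_gt0 x0.
set a := - (ip x y / ip x x).
have := ipq_ge0 (a *: x + y).
rewrite ipDl !ipDr !ipZl !ipZr (ipC y x) => h.
have e : a * (a * ip x x) + a * ip x y + (a * ip x y + ip y y)
   = ip y y - ip x y ^+ 2 / ip x x.
  rewrite /a; field; by rewrite gt_eqF.
rewrite e subr_ge0 ler_pdivrMr // in h.
by rewrite mulrC.
Qed.

Lemma ratio_bound {x y} : x != 0 -> y != 0 ->
  -1 <= ip x y / (ip_norm ip x * ip_norm ip y) <= 1.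
Proof.
move=> x0 y0.
have nn : 0 < ip_norm ip x * ip_norm ip y.
  by rewrite mulr_gt0 // sqrtr_gt0 ipq_gt0.
rewrite -ler_norml normrM normfV (ger0_norm (ltW nn)) ler_pdivrMr // mul1r.
rewrite /ip_norm -sqrtrM ?ipq_ge0 // -sqrtr_sqr ler_sqrt ?mulr_ge0 ?ipq_ge0 //.
exact: cauchy_schwarz.
Qed.

Lemma angle_iff x y th : x != 0 -> y != 0 -> 0 <= th <= pi ->
  (ip_angle ip x y = th <-> ip x y = cos th * (ip_norm ip x * ip_norm ip y)).
Proof.
move=> x0 y0 hth.
have nn : 0 < ip_norm ip x * ip_norm ip y.
  by rewrite mulr_gt0 // sqrtr_gt0 ipq_gt0.
have rb := ratio_bound x0 y0.
rewrite /ip_angle; split.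
  move=> h; have := @acosK R (ip x y / (ip_norm ip x * ip_norm ip y)).
  rewrite in_itv /= rb h => /(_ isT) ->.
  by rewrite divfK // gt_eqF.
move=> ->; rewrite mulfK ?gt_eqF //.
by apply: cosK; rewrite in_itv /= hth.
Qed.

End IP.
Arguments ipC {R V ip}.
Arguments ip_lin {R V ip}.
Arguments ip0l {R V ip}.
Arguments ipDl {R V ip}.
Arguments ipZl {R V ip}.
Arguments ipDr {R V ip}.
Arguments ipZr {R V ip}.
Arguments ip0r {R V ip}.
Arguments ipNl {R V ip}.
Arguments ipNr {R V ip}.
Arguments ipq_gt0 {R V ip}.
Arguments ipq_ge0 {R V ip}.
Arguments cauchy_schwarz {R V ip}.
Arguments ratio_bound {R V ip}.
Arguments angle_iff {R V ip}.

Lemma polar (R : realType) (V : lmodType R) (ip : V -> V -> R) :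
  is_inner_product ip -> forall x y,
  ip (x + y) (x + y) = ip x x + 2 * ip x y + ip y y.
Proof.
move=> H x y; rewrite !(ipDl H) !(ipDr H) (ipC H y x); ring.
Qed.

Lemma ortho_pres (R : realType) (V : lmodType R) (ip1 ip2 : V -> V -> R)
  (th : R) :
  is_inner_product ip1 -> is_inner_product ip2 ->
  0 < th -> th < pi ->
  (forall x y : V, x != 0 -> y != 0 ->
     (ip_angle ip1 x y = th <-> ip_angle ip2 x y = th)) ->
  forall x y, ip1 x y = 0 -> ip2 x y = 0.
Proof.
move=> H1 H2 th0 thpi Hang x y h.
have [->|x0] := eqVneq x 0; first by rewrite (ip0l H2).
have [->|y0] := eqVneq y 0; first by rewrite (ip0r H2).
have hth : 0 <= th <= pi by rewrite !ltW.
pose k := cos th; pose s := sin th.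
have hs : 0 < s by apply: sin_gt0_pi; rewrite th0 thpi.
have hks : k ^+ 2 + s ^+ 2 = 1 by exact: cos2Dsin2.
pose al := ip_norm ip1 x; pose be := ip_norm ip1 y.
have al0 : 0 < al by rewrite sqrtr_gt0 (ipq_gt0 H1).
have be0 : 0 < be by rewrite sqrtr_gt0 (ipq_gt0 H1).
have al2 : al ^+ 2 = ip1 x x by rewrite sqr_sqrtr // (ipq_ge0 H1).
have be2 : be ^+ 2 = ip1 y y by rewrite sqr_sqrtr // (ipq_ge0 H1).
pose a := ip2 x x; pose b := ip2 x y; pose d := ip2 y y.
have a0 : 0 < a by rewrite (ipq_gt0 H2).
pose P e := (k*be*a + e*s*al*b)^+2
   - k^+2*a*((k*be)^+2*a + 2*(k*be)*(e*s*al)*b + (e*s*al)^+2*d).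
have key : forall e : R, e ^+ 2 = 1 -> P e = 0.
  move=> e e2.
  pose v := (k*be) *: x + (e*s*al) *: y.
  have q1v : ip1 v v = (al * be) ^+ 2.
    rewrite /v !(ipDl H1) !(ipDr H1) !(ipZl H1) !(ipZr H1) (ipC H1 y x) h.
    rewrite -al2 -be2.
    have -> : (al * be) ^+ 2 = (k^+2 + s^+2) * (al * be) ^+ 2 by rewrite hks mul1r.
    rewrite -[s ^+ 2]mul1r -e2; ring.
  have v0 : v != 0.
    apply/eqP => v0; move: q1v; rewrite v0 (ip0l H1) => /esym/eqP.
    by rewrite sqrf_eq0 mulf_eq0 !gt_eqF.
  have n1v : ip_norm ip1 v = al * be.
    by rewrite /ip_norm q1v sqrtr_sqr ger0_norm // mulr_ge0 // ltW.
  have i1 : ip1 x v = k * (al * (al * be)).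
    rewrite /v (ipDr H1) !(ipZr H1) h -al2; ring.
  have : ip_angle ip1 x v = th.
    by rewrite (angle_iff H1 _ _ _ x0 v0 hth) n1v.
  move=> /(Hang _ _ x0 v0) /(angle_iff H2 _ _ _ x0 v0 hth) i2.
  have ex1 : ip2 x v = k*be*a + e*s*al*b.
    rewrite /v (ipDr H2) !(ipZr H2) /a /b; ring.
  have ex2 : ip2 v v = (k*be)^+2*a + 2*(k*be)*(e*s*al)*b + (e*s*al)^+2*d.
    rewrite /v !(ipDl H2) !(ipDr H2) !(ipZl H2) !(ipZr H2) (ipC H2 y x) /a /b /d; ring.
  rewrite /P -ex1 -ex2 i2 /ip_norm exprMn exprMn !sqr_sqrtr ?(ipq_ge0 H2) //.
  rewrite /k /a; ring.
have D : P 1 - P (-1) = 4 * (k * b) * (be * s * al * a * s ^+ 2).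
  have -> : s ^+ 2 = 1 - k ^+ 2 by rewrite -hks; ring.
  rewrite /P; ring.
rewrite key ?expr1n // key ?sqrrN ?expr1n // subrr in D.
move/esym/eqP: D; rewrite !mulf_eq0 (gt_eqF be0) (gt_eqF hs) (gt_eqF al0) (gt_eqF a0) /= ?orbF pnatr_eq0 /= => /orP[/eqP k0|/eqP //].
have := key 1 (expr1n _ _); rewrite /P k0.
have -> : (0 * be * a + 1 * s * al * b) ^+ 2 -
  0 ^+ 2 * a * ((0 * be) ^+ 2 * a + 2 * (0 * be) * (1 * s * al) * b + (1 * s * al) ^+ 2 * d)
  = (s * al * b) ^+ 2 by ring.
move/eqP; rewrite sqrf_eq0 !mulf_eq0 (gt_eqF hs) (gt_eqF al0) /= => /eqP.
done.
Qed.

Theorem mainTheorem5 (R : realType) (V : lmodType R) (ip1 ip2 : V -> V -> R)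
  (theta0 : R) :
  is_inner_product ip1 -> is_inner_product ip2 ->
  0 < theta0 -> theta0 < pi ->
  (forall x y : V, x != 0 -> y != 0 ->
     (ip_angle ip1 x y = theta0 <-> ip_angle ip2 x y = theta0)) ->
  exists c : R, 0 < c /\ forall x y : V, ip2 x y = c * ip1 x y.
Proof.
move=> H1 H2 th0 thpi Hang.
have orth := @ortho_pres _ _ _ _ _ H1 H2 th0 thpi Hang.

have qeq : forall x y, ip1 x x = ip1 y y -> ip2 x x = ip2 y y.
  move=> x y e.
  have : ip1 (x + y) (x - y) = 0.
    rewrite (ipDl H1) !(ipDr H1) !(ipNr H1) (ipC H1 y x) e; ring.
  move/orth; rewrite (ipDl H2) !(ipDr H2) !(ipNr H2) (ipC H2 y x) => h; lra.
have [[x0 nz]|allz] := pselect (exists x0 : V, x0 != 0); last first.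
  exists 1; split => // x y.
  have -> : x = 0 by apply/eqP/negPn/negP => h; apply: allz; exists x.
  by rewrite (ip0l H1) (ip0l H2) mulr0.
have q10 := ipq_gt0 H1 _ nz; have q20 := ipq_gt0 H2 _ nz.
pose c := ip2 x0 x0 / ip1 x0 x0.
have c0 : 0 < c by rewrite divr_gt0.
have q : forall x, ip2 x x = c * ip1 x x.
  move=> x; have [->|xn] := eqVneq x 0; first by rewrite (ip0l H1) (ip0l H2) mulr0.
  have qx := ipq_gt0 H1 _ xn.
  pose t := Num.sqrt (ip1 x0 x0 / ip1 x x).
  have tt : t * t = ip1 x0 x0 / ip1 x x.
    by rewrite -expr2 sqr_sqrtr // divr_ge0 // ltW.
  have : ip1 (t *: x) (t *: x) = ip1 x0 x0.
    rewrite (ipZl H1) (ipZr H1) mulrA tt; field; by rewrite gt_eqF.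
  move/qeq; rewrite (ipZl H2) (ipZr H2) mulrA tt => E.
  rewrite /c -E; field; rewrite !gt_eqF //.
exists c; split => // x y.
have := q (x + y); rewrite (@polar _ _ _ H1) (@polar _ _ _ H2) !q => h.
have : 2 * (ip2 x y - c * ip1 x y) = 0.
  rewrite !mulrDr in h; lra.
move/eqP; rewrite mulf_eq0 pnatr_eq0 /= subr_eq0 => /eqP //.
Qed.
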